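(* Let $a$ be the unique positive real number with $\frac{1-\ln a}{a}=\frac1e$ (so $a\approx1.54$), and let $\psi_a(x)=1-(1-x)a^x$ for $x\in[0,1]$. Then $\psi_a$ is a convex, strictly increasing, three times differentiable bijection of $[0,1]$ onto $[0,1]$ with $\psi_a'>0$ on $[0,1]$, and it satisfies: (1) $x\psi_a'(x)/\psi_a(x)$ is strictly increasing on $(0,1]$; (2) $x\psi_a''(x)/\psi_a'(x)$ is strictly increasing on $(0,1]$; (3) $\psi_a(e^{-r/e})+\psi_a(re^{-r/e})\ge1$ for all $0\le r\le1$. *)

(* Defs.v *)
From Stdlib Require Import Reals.
Open Scope R_scope.

Definition psi (a x : R) : R := 1 - (1 - x) * Rpower a x.

Definition convex_on_01 (f : R -> R) : Prop :=
  forall x y t, 0 <= x <= 1 -> 0 <= y <= 1 -> 0 <= t <= 1 ->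
    f (t * x + (1 - t) * y) <= t * f x + (1 - t) * f y.

(* Main.v *)
Require Import Defs.
From Stdlib Require Import Reals Lra Psatz.
From Coquelicot Require Import Coquelicot.
Open Scope R_scope.

Lemma incr_lt (f f' : R -> R) a b : a < b ->
  (forall x, a <= x <= b -> derivable_pt_lim f x (f' x)) ->
  (forall x, a < x < b -> 0 < f' x) -> f a < f b.
Proof.
intros Hab Hd Hp. destruct (MVT_cor2 f f' a b Hab Hd) as [c [Hc Hc2]].
specialize (Hp c Hc2). nra.
Qed.

Lemma incr_le (f f' : R -> R) a b : a <= b ->
  (forall x, a <= x <= b -> derivable_pt_lim f x (f' x)) ->
  (forall x, a <= x <= b -> 0 <= f' x) -> f a <= f b.
Proof.
intros Hab Hd Hp. destruct (Req_dec a b) as [->|Hne]; [lra|].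
assert (Hab' : a < b) by lra.
destruct (MVT_cor2 f f' a b Hab' Hd) as [c [Hc Hc2]].
assert (0 <= f' c) by (apply Hp; lra). nra.
Qed.

Lemma pade t : 0 <= t < 2 -> exp t <= (2+t)/(2-t).
Proof.
intros Ht.
assert (H : (2 - t) * exp t - (2 + t) <= (2 - 0) * exp 0 - (2 + 0)).
{ set (g := fun t => (2 - t) * exp t - (2 + t)).
  set (g' := fun t => (1 - t) * exp t - 1).
  assert (- g 0 <= - g t).
  { apply (incr_le (fun x => - g x) (fun x => - g' x)). lra.
    intros x _. apply is_derive_Reals. unfold g, g'. auto_derive; auto. ring.
    intros x _. unfold g'. assert (1 - x <= exp (- x)) by (generalize (exp_ineq1_le (-x)); lra).
    assert (exp (-x) * exp x = 1) by (rewrite <- exp_plus; replace (-x+x) with 0 by ring; apply exp_0).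
    assert (0 < exp x) by apply exp_pos. nra. }
  unfold g in H. lra. }
rewrite exp_0 in H. apply Rcomplements.Rle_div_r. lra. lra.
Qed.

Definition ps L x := 1 - (1 - x) * exp (x * L).
Definition d1 L x := exp (x * L) * (1 - L + L * x).
Definition d2 L x := L * exp (x * L) * (2 - L + L * x).
Definition d3 L x := L * L * exp (x * L) * (3 - L + L * x).

Lemma ps_der L x : derivable_pt_lim (ps L) x (d1 L x).
Proof. apply is_derive_Reals. unfold ps, d1. auto_derive; auto. ring. Qed.
Lemma d1_der L x : derivable_pt_lim (d1 L) x (d2 L x).
Proof. apply is_derive_Reals. unfold d1, d2. auto_derive; auto. ring. Qed.
Lemma d2_der L x : derivable_pt_lim (d2 L) x (d3 L x).
Proof. apply is_derive_Reals. unfold d2, d3. auto_derive; auto. ring. Qed.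

Lemma d1_pos L x : 0 < L < 1 -> 0 <= x -> 0 < d1 L x.
Proof. intros. unfold d1. apply Rmult_lt_0_compat. apply exp_pos. nra. Qed.

Lemma d2_pos L x : 0 < L < 1 -> 0 <= x -> 0 < d2 L x.
Proof. intros. unfold d2. apply Rmult_lt_0_compat. apply Rmult_lt_0_compat. lra. apply exp_pos. nra. Qed.

Lemma d1_mono L x y : 0 < L < 1 -> 0 <= x -> x <= y -> d1 L x <= d1 L y.
Proof.
intros. unfold d1. apply Rmult_le_compat. left; apply exp_pos. nra.
destruct (Req_dec x y) as [->|]; [lra|]. left. apply exp_increasing. nra. nra.
Qed.

Lemma ps0 L : ps L 0 = 0.
Proof. unfold ps. rewrite Rmult_0_l, exp_0. ring. Qed.
Lemma ps1 L : ps L 1 = 1.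
Proof. unfold ps. ring. Qed.

Lemma ps_lt L x y : 0 < L < 1 -> 0 <= x -> x < y -> ps L x < ps L y.
Proof.
intros. apply (incr_lt _ (d1 L)); auto. intros; apply ps_der.
intros; apply d1_pos; lra.
Qed.

Lemma ps_le L x y : 0 < L < 1 -> 0 <= x -> x <= y -> ps L x <= ps L y.
Proof.
intros. destruct (Req_dec x y) as [->|]. lra. left. apply ps_lt; lra.
Qed.

Lemma convex_gen (f f' : R -> R) :
  (forall x, 0 <= x <= 1 -> derivable_pt_lim f x (f' x)) ->
  (forall x y, 0 <= x -> x <= y -> y <= 1 -> f' x <= f' y) ->
  forall x y t, 0 <= x -> x < y -> y <= 1 -> 0 <= t <= 1 ->
    f (t * x + (1 - t) * y) <= t * f x + (1 - t) * f y.
Proof.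
intros Hd Hm x y t Hx Hxy Hy Ht.
destruct (Req_dec t 0) as [->|Ht0].
{ replace (0 * x + (1 - 0) * y) with y by ring. lra. }
destruct (Req_dec t 1) as [->|Ht1].
{ replace (1 * x + (1 - 1) * y) with x by ring. lra. }
set (z := t * x + (1 - t) * y).
assert (Hxz : x < z) by (unfold z; nra).
assert (Hzy : z < y) by (unfold z; nra).
destruct (MVT_cor2 f f' x z Hxz) as [p [Hp1 Hp2]].
{ intros; apply Hd; lra. }
destruct (MVT_cor2 f f' z y Hzy) as [q [Hq1 Hq2]].
{ intros; apply Hd; lra. }
assert (Hpq : f' p <= f' q) by (apply Hm; lra).
assert (H0 : 0 <= t * (1 - t) * (y - x) * (f' q - f' p)).
{ apply Rmult_le_pos; [|lra]. apply Rmult_le_pos; [|lra]. nra. }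
replace (f x) with (f z - f' p * (z - x)) by lra.
replace (f y) with (f z + f' q * (y - z)) by lra.
unfold z in *. nra.
Qed.

Lemma ps_convex L : 0 < L < 1 -> convex_on_01 (ps L).
Proof.
intros HL x y t Hx Hy Ht.
assert (Hd : forall x, 0 <= x <= 1 -> derivable_pt_lim (ps L) x (d1 L x)) by (intros; apply ps_der).
assert (Hm : forall x y, 0 <= x -> x <= y -> y <= 1 -> d1 L x <= d1 L y) by (intros; apply d1_mono; lra).
destruct (Rtotal_order x y) as [H|[H|H]].
- apply (convex_gen _ _ Hd Hm); lra.
- subst. replace (t * y + (1 - t) * y) with y by ring. lra.
- replace (t * x + (1 - t) * y) with ((1 - t) * y + (1 - (1 - t)) * x) by ring.
  replace (t * ps L x + (1 - t) * ps L y) with ((1 - t) * ps L y + (1 - (1 - t)) * ps L x) by ring.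
  apply (convex_gen _ _ Hd Hm); lra.
Qed.

Lemma G2_eq L x : 0 < L < 1 -> 0 <= x -> x * d2 L x / d1 L x = L * x + 1 - (1 - L) / (1 - L + L * x).
Proof.
intros. unfold d1, d2. assert (0 < exp (x * L)) by apply exp_pos.
field. split; nra.
Qed.

Lemma G2_mono L x y : 0 < L < 1 -> 0 <= x -> x < y ->
  x * d2 L x / d1 L x < y * d2 L y / d1 L y.
Proof.
intros. rewrite !G2_eq by lra.
assert ((1 - L) / (1 - L + L * y) < (1 - L) / (1 - L + L * x)).
{ assert (0 <= L * x) by nra. assert (L * x < L * y) by nra.
  unfold Rdiv. apply Rmult_lt_compat_l. lra. apply Rinv_lt_contravar.
  apply Rmult_lt_0_compat; lra. lra. }
assert (L * x < L * y) by nra. lra.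
Qed.

Lemma ps_pos L x : 0 < L < 1 -> 0 < x -> 0 < ps L x.
Proof. intros. rewrite <- (ps0 L). apply ps_lt; lra. Qed.

Lemma Kpos L x : 0 < L < 1 -> 0 < x ->
  0 < (d1 L x + x * d2 L x) * ps L x - x * d1 L x * d1 L x.
Proof.
intros HL Hx.
set (K := fun t => (d1 L x + x * d2 L x) * ps L t - d1 L x * (t * d1 L t)).
set (K' := fun t => (d1 L x + x * d2 L x) * d1 L t - d1 L x * (d1 L t + t * d2 L t)).
assert (K 0 < K x).
{ apply (incr_lt _ K'). lra.
  - intros t _. unfold K, K'.
    apply derivable_pt_lim_minus. apply derivable_pt_lim_scal with (f := ps L). apply ps_der.
    apply derivable_pt_lim_scal with (f := fun t => t * d1 L t).
    replace (d1 L t + t * d2 L t) with (1 * d1 L t + t * d2 L t) by ring.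
    apply (derivable_pt_lim_mult id (d1 L)). apply derivable_pt_lim_id. apply d1_der.
  - intros t Ht. unfold K'.
    assert (h := G2_mono L t x HL ltac:(lra) ltac:(lra)).
    assert (0 < d1 L t) by (apply d1_pos; lra).
    assert (0 < d1 L x) by (apply d1_pos; lra).
    assert (e1 : t * d2 L t = (t * d2 L t / d1 L t) * d1 L t) by (field; lra).
    assert (e2 : x * d2 L x = (x * d2 L x / d1 L x) * d1 L x) by (field; lra).
    rewrite e1, e2.
    set (gt := t * d2 L t / d1 L t) in *. set (gx := x * d2 L x / d1 L x) in *.
    assert (0 < d1 L x * d1 L t * (gx - gt)).
    { apply Rmult_lt_0_compat. apply Rmult_lt_0_compat; lra. lra. }
    replace ((d1 L x + gx * d1 L x) * d1 L t - d1 L x * (d1 L t + gt * d1 L t))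
      with (d1 L x * d1 L t * (gx - gt)) by ring. lra. }
unfold K in H. rewrite ps0 in H. lra.
Qed.

Lemma G1_mono L x y : 0 < L < 1 -> 0 < x -> x < y ->
  x * d1 L x / ps L x < y * d1 L y / ps L y.
Proof.
intros HL Hx Hxy.
apply (incr_lt (fun t => t * d1 L t / ps L t)
   (fun t => ((d1 L t + t * d2 L t) * ps L t - t * d1 L t * d1 L t) / Rsqr (ps L t))); auto.
- intros t Ht. assert (0 < ps L t) by (apply ps_pos; lra).
  replace ((d1 L t + t * d2 L t) * ps L t - t * d1 L t * d1 L t)
    with ((1 * d1 L t + t * d2 L t) * ps L t - d1 L t * (t * d1 L t)) by ring.
  apply (derivable_pt_lim_div (fun t => t * d1 L t) (ps L)).
  apply (derivable_pt_lim_mult id (d1 L)). apply derivable_pt_lim_id. apply d1_der.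
  apply ps_der. lra.
- intros t Ht. assert (0 < ps L t) by (apply ps_pos; lra).
  apply Rdiv_lt_0_compat. apply Kpos; lra. apply Rsqr_pos_lt; lra.
Qed.
Lemma Mpos r k c : 0 <= r <= 1 -> 0 < k <= 1/2 -> 1/2 < c < 3/5 ->
 0 <= 8-8*c*c+8*k*c-16*k*c*c+r*(4*k-12*k*c+8*k*c*c-8*k*k*c)+r*r*(-10*k*k+16*k*k*c-6*k*k*c*c-6*k*k*k*c+4*k*k*k*c*c)+r*r*r*k*k*k*(3-5*c+2*c*c).
Proof.
intros Hr Hk Hc.
assert (Hkc : 0 <= k*c <= 3/10) by nra.
assert (Hkc2 : k*c*(2*c-1) <= 3/10 * (1/5)).
{ apply Rmult_le_compat; lra. }
assert (Hcc : c*c <= 9/25) by nra.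
assert (A0 : 8-8*c*c+8*k*c-16*k*c*c >= 4) by nra.
assert (A1 : 4*k-12*k*c+8*k*c*c-8*k*k*c >= -3/2).
{ assert (k*(k*c) <= 1/2*(3/10)) by (apply Rmult_le_compat; lra).
  assert (k*((1-c)*(2*c-1)) <= 1/2*(1/2*(1/5))).
  { apply Rmult_le_compat; try lra. nra. apply Rmult_le_compat; lra. }
  nra. }
assert (Hk2 : 0 <= k*k <= 1/4) by nra.
assert (Hk3 : 0 <= k*k*k <= 1/8) by nra.
assert (A2 : -10*k*k+16*k*k*c-6*k*k*c*c-6*k*k*k*c+4*k*k*k*c*c >= -3/2).
{ assert (H1 : 0 <= (1-c)*(5-3*c) <= 2) by nra.
  assert (H2 : -4 <= c*(-6+4*c) <= 0) by nra.
  assert ((k*k)*((1-c)*(5-3*c)) <= 1/4*2) by (apply Rmult_le_compat; lra).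
  assert ((k*k*k)*(c*(-6+4*c)) >= 1/8*(-4)) by nra.
  nra. }
assert (A3 : 0 <= k*k*k*(3-5*c+2*c*c)).
{ apply Rmult_le_pos; nra. }
assert (r*(4*k-12*k*c+8*k*c*c-8*k*k*c) >= -3/2) by nra.
assert (Hr2 : 0 <= r*r <= 1) by nra.
assert (r*r*(-10*k*k+16*k*k*c-6*k*k*c*c-6*k*k*k*c+4*k*k*k*c*c) >= -3/2) by nra.
assert (0 <= r*r*r*k*k*k*(3-5*c+2*c*c)).
{ replace (r*r*r*k*k*k*(3-5*c+2*c*c)) with ((r*r*r)*(k*k*k*(3-5*c+2*c*c))) by ring.
  apply Rmult_le_pos; [|lra]. nra. }
lra.
Qed.

Definition hh L y := (1 - y) * ((2 + L * y) / (2 - L * y)).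

Lemma hh_decr L u v : 0 < L < 1 -> 0 <= u -> u <= v -> v <= 1 -> hh L v <= hh L u.
Proof.
intros HL Hu Huv Hv. unfold hh.
assert (0 <= L * u) by nra. assert (L * u <= L * v) by nra. assert (L * v < 1) by nra.
assert (E : (1 - u) * ((2 + L * u) / (2 - L * u)) - (1 - v) * ((2 + L * v) / (2 - L * v))
   = (v - u) * (4 - 4 * L + 2 * L * (u + v) - L * L * u * v) / ((2 - L * u) * (2 - L * v))).
{ field. lra. }
assert (0 <= (v - u) * (4 - 4 * L + 2 * L * (u + v) - L * L * u * v) / ((2 - L * u) * (2 - L * v))).
{ apply Rdiv_le_0_compat. apply Rmult_le_pos. lra.
  assert (L * L * u * v <= L * v) by (assert (0 <= L*v) by nra; nra). nra.
  apply Rmult_lt_0_compat; lra. }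
lra.
Qed.

Lemma final_ineq r k L : 0 <= r <= 1 -> 0 < k <= 1/2 -> 2/5 < L < 1/2 ->
  2 * (1 - L) * r / (2 + (1 + 2 * L) * k * r) + hh L (r * (2 - k * r) / (2 + k * r)) <= 1.
Proof.
intros Hr Hk HL.
assert (0 <= k * r <= 1/2) by nra.
assert (0 <= L * k * r) by nra.
assert (0 <= L * r <= 1/2) by nra.
assert (Y : 0 <= r * (2 - k * r) / (2 + k * r) <= 1).
{ split. apply Rdiv_le_0_compat; nra. apply Rcomplements.Rle_div_l; nra. }
assert (LY : L * (r * (2 - k * r) / (2 + k * r)) < 1) by nra.
assert (EQ : 1 - (2 * (1 - L) * r / (2 + (1 + 2 * L) * k * r) + hh L (r * (2 - k * r) / (2 + k * r)))
  = r * r * (let c := 1 - L in 8-8*c*c+8*k*c-16*k*c*c+r*(4*k-12*k*c+8*k*c*c-8*k*k*c)+r*r*(-10*k*k+16*k*k*c-6*k*k*c*c-6*k*k*k*c+4*k*k*k*c*c)+r*r*r*k*k*k*(3-5*c+2*c*c))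
    / ((2 + (1 + 2 * L) * k * r) * ((2 + k * r) * (4 + 2 * k * r - 2 * L * r + L * k * r * r)))).
{ unfold hh. simpl. field. repeat split; try nra. }
assert (0 <= r * r * (let c := 1 - L in 8-8*c*c+8*k*c-16*k*c*c+r*(4*k-12*k*c+8*k*c*c-8*k*k*c)+r*r*(-10*k*k+16*k*k*c-6*k*k*c*c-6*k*k*k*c+4*k*k*k*c*c)+r*r*r*k*k*k*(3-5*c+2*c*c))
    / ((2 + (1 + 2 * L) * k * r) * ((2 + k * r) * (4 + 2 * k * r - 2 * L * r + L * k * r * r)))).
{ apply Rdiv_le_0_compat. apply Rmult_le_pos. nra. simpl. apply Mpos; lra.
  apply Rmult_lt_0_compat. nra. apply Rmult_lt_0_compat. nra. nra. }
lra.
Qed.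

Lemma part3 L r : 2/5 < L < 1/2 -> exp L = exp 1 * (1 - L) -> 0 <= r <= 1 ->
  ps L (exp (- r / exp 1)) + ps L (r * exp (- r / exp 1)) >= 1.
Proof.
intros HL HeL Hr.
assert (He : 2 <= exp 1) by (generalize (exp_ineq1_le 1); lra).
set (k := / exp 1).
assert (Hk : 0 < k <= 1/2).
{ unfold k. split. apply Rinv_0_lt_compat; lra.
  replace (1/2) with (/2) by field. apply Rinv_le_contravar; lra. }
assert (Hek : exp 1 * k = 1) by (unfold k; field; lra).
replace (- r / exp 1) with (- (r * k)) by (unfold k; field; lra).
set (s := r * k).
assert (Hs : 0 <= s <= 1/2) by (unfold s; nra).
set (y1 := exp (- s)).
assert (Hy1p : 0 < y1) by apply exp_pos.
assert (Hy1 : y1 <= 1).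
{ unfold y1. rewrite <- exp_0. destruct (Req_dec s 0) as [->|]. rewrite Ropp_0; lra.
  left. apply exp_increasing. lra. }
assert (Hy1l : (2 - s) / (2 + s) <= y1).
{ unfold y1. rewrite exp_Ropp. assert (h := pade s ltac:(lra)).
  assert (0 < exp s) by apply exp_pos.
  replace ((2 - s) / (2 + s)) with (/ ((2 + s) / (2 - s))) by (field; lra).
  apply Rinv_le_contravar; lra. }
set (w := 1 - y1).
assert (Hw : 0 <= w <= 2 * s / (2 + s)).
{ unfold w. split. lra.
  replace (2 * s / (2 + s)) with (1 - (2 - s) / (2 + s)) by (field; lra). lra. }
assert (T1 : w * exp (y1 * L) <= 2 * (1 - L) * r / (2 + (1 + 2 * L) * k * r)).
{ replace (y1 * L) with (L + - (L * w)) by (unfold w; ring).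
  rewrite exp_plus, exp_Ropp.
  assert (h1 : 1 + L * w <= exp (L * w)) by apply exp_ineq1_le.
  assert (0 <= L * w) by nra.
  assert (h2 : / exp (L * w) <= / (1 + L * w)) by (apply Rinv_le_contravar; lra).
  assert (0 < exp L) by apply exp_pos.
  set (W := 2 * s / (2 + s)) in *.
  assert (0 <= L * W) by nra.
  assert (h3 : w / (1 + L * w) <= W / (1 + L * W)).
  { assert (E : W / (1 + L * W) - w / (1 + L * w) = (W - w) / ((1 + L * W) * (1 + L * w))) by (field; lra).
    assert (0 <= (W - w) / ((1 + L * W) * (1 + L * w))).
    { apply Rdiv_le_0_compat. lra. apply Rmult_lt_0_compat; lra. }
    lra. }
  assert (E2 : exp L * (W / (1 + L * W)) = 2 * (1 - L) * r / (2 + (1 + 2 * L) * k * r)).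
  { rewrite HeL. unfold W, s. replace (exp 1) with (/ k) by (unfold k; field; lra).
    field. repeat split; try lra. all: try nra. assert (0 <= k * r) by (apply Rmult_le_pos; lra). assert (0 <= (1+2*L)*k*r) by (rewrite Rmult_assoc; apply Rmult_le_pos; lra). lra. }
  rewrite <- E2.
  assert (w * (exp L * / exp (L * w)) <= exp L * (w / (1 + L * w))).
  { unfold Rdiv. replace (w * (exp L * / exp (L * w))) with (exp L * (w * / exp (L * w))) by ring.
    apply Rmult_le_compat_l. lra. apply Rmult_le_compat_l; lra. }
  assert (exp L * (w / (1 + L * w)) <= exp L * (W / (1 + L * W))) by (apply Rmult_le_compat_l; lra).
  lra. }
set (y2 := r * y1).
assert (Hy2 : 0 <= y2 <= 1) by (unfold y2; nra).
set (Y := r * (2 - k * r) / (2 + k * r)).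
assert (HY : 0 <= Y <= y2).
{ unfold Y, y2. replace (k * r) with s by (unfold s; ring).
  split. apply Rdiv_le_0_compat; nra.
  replace (r * (2 - s) / (2 + s)) with (r * ((2 - s) / (2 + s))) by (field; lra).
  apply Rmult_le_compat_l; lra. }
assert (T2 : (1 - y2) * exp (y2 * L) <= hh L Y).
{ apply Rle_trans with (hh L y2); [|apply hh_decr; lra].
  unfold hh. apply Rmult_le_compat_l. lra.
  replace (L * y2) with (y2 * L) by ring. apply pade. nra. }
assert (F := final_ineq r k L Hr Hk HL).
fold Y in F.
unfold ps. fold y2. fold w. lra.
Qed.

Theorem lemma4p2 (a : R) (ha : 0 < a) (hdef : (1 - ln a) / a = / exp 1) :
  (* a is the unique positive solution *)
  (forall b, 0 < b -> (1 - ln b) / b = / exp 1 -> b = a) /\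
  (* convex on [0,1] *)
  convex_on_01 (psi a) /\
  (* strictly increasing on [0,1] *)
  (forall x y, 0 <= x -> x < y -> y <= 1 -> psi a x < psi a y) /\
  (* bijection of [0,1] onto [0,1] *)
  (forall x, 0 <= x <= 1 -> 0 <= psi a x <= 1) /\
  (forall x y, 0 <= x <= 1 -> 0 <= y <= 1 -> psi a x = psi a y -> x = y) /\
  (forall y, 0 <= y <= 1 -> exists x, 0 <= x <= 1 /\ psi a x = y) /\
  (* three times differentiable on [0,1], with derivatives d1 = psi', d2 = psi'', d3 = psi''' *)
  (exists d1 d2 d3 : R -> R,
     (forall x, 0 <= x <= 1 ->
        derivable_pt_lim (psi a) x (d1 x) /\
        derivable_pt_lim d1 x (d2 x) /\
        derivable_pt_lim d2 x (d3 x)) /\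
     (* psi' > 0 on [0,1] *)
     (forall x, 0 <= x <= 1 -> 0 < d1 x) /\
     (* (1) x psi'(x)/psi(x) strictly increasing on (0,1] *)
     (forall x y, 0 < x -> x < y -> y <= 1 ->
        x * d1 x / psi a x < y * d1 y / psi a y) /\
     (* (2) x psi''(x)/psi'(x) strictly increasing on (0,1] *)
     (forall x y, 0 < x -> x < y -> y <= 1 ->
        x * d2 x / d1 x < y * d2 y / d1 y)) /\
  (* (3) *)
  (forall r, 0 <= r <= 1 ->
     psi a (exp (- r / exp 1)) + psi a (r * exp (- r / exp 1)) >= 1).
Proof.
change (psi a) with (ps (ln a)).
assert (Ha : exp (ln a) = a) by (apply exp_ln; lra).
set (L := ln a) in *.
assert (He : 0 < exp 1) by apply exp_pos.
assert (H1 : 1 - L = a * / exp 1) by (rewrite <- hdef; field; lra).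
assert (HeL : exp L = exp 1 * (1 - L)) by (rewrite H1, Ha; field; lra).
assert (0 < a * / exp 1) by (apply Rmult_lt_0_compat; [lra| apply Rinv_0_lt_compat; lra]).
assert (HL1 : L < 1) by lra.
assert (HLb : 2/5 < L < 1/2).
{ split.
  - destruct (Rle_or_lt L (2/5)) as [h|h]; [exfalso|lra].
    assert (exp L <= exp (2/5)).
    { destruct (Req_dec L (2/5)) as [->|]; [lra|left; apply exp_increasing; lra]. }
    assert (E : exp 1 = exp (2/5) * (exp (3/10) * exp (3/10))).
    { rewrite <- !exp_plus. f_equal. field. }
    assert (1 + 3/10 <= exp (3/10)) by apply exp_ineq1_le.
    assert (0 < exp (2/5)) by apply exp_pos.
    assert (exp (3/10) * exp (3/10) >= 169/100) by nra.
    nra.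
  - destruct (Rle_or_lt (1/2) L) as [h|h]; [exfalso|lra].
    assert (exp (1/2) <= exp L).
    { destruct (Req_dec L (1/2)) as [<-|]; [lra|left; apply exp_increasing; lra]. }
    assert (E : exp 1 = exp (1/2) * exp (1/2)).
    { rewrite <- !exp_plus. f_equal. field. }
    assert (h2 := pade (1/2) ltac:(lra)).
    assert (0 < exp (1/2)) by apply exp_pos.
    nra. }
assert (HL : 0 < L < 1) by lra.
split; [|split; [|split; [|split; [|split; [|split; [|split]]]]]].
- intros b hb hb2.
  assert (Hb : exp (ln b) = b) by (apply exp_ln; lra).
  assert (Hb1 : 1 - ln b = b * / exp 1) by (rewrite <- hb2; field; lra).
  assert (HbL : exp (ln b) = exp 1 * (1 - ln b)) by (rewrite Hb1, Hb; field; lra).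
  assert (ln b = L).
  { destruct (Rtotal_order (ln b) L) as [h|[h|h]]; auto; exfalso.
    + assert (exp (ln b) < exp L) by (apply exp_increasing; lra). nra.
    + assert (exp L < exp (ln b)) by (apply exp_increasing; lra). nra. }
  rewrite <- Hb, <- Ha. f_equal. exact H0.
- apply ps_convex; exact HL.
- intros; apply ps_lt; auto.
- intros x Hx. rewrite <- (ps0 L), <- (ps1 L). split; apply ps_le; lra.
- intros x y Hx Hy E. destruct (Rtotal_order x y) as [h|[h|h]]; auto.
  + assert (ps L x < ps L y) by (apply ps_lt; lra). lra.
  + assert (ps L y < ps L x) by (apply ps_lt; lra). lra.
- intros y Hy.
  assert (Hc : continuity (fun x => ps L x - y)).
  { intro x. apply continuity_pt_minus. apply derivable_continuous_pt.
    exists (d1 L x). apply ps_der. apply continuity_pt_const. intros u v; reflexivity. }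
  destruct (IVT_cor _ 0 1 Hc ltac:(lra)) as [z [Hz Hz2]].
  { rewrite ps0, ps1. nra. }
  exists z. split; auto. lra.
- exists (d1 L), (d2 L), (d3 L). split; [|split; [|split]].
  + intros x _. split; [apply ps_der|split; [apply d1_der|apply d2_der]].
  + intros x Hx. apply d1_pos; lra.
  + intros x y Hx Hxy Hy. apply G1_mono; lra.
  + intros x y Hx Hxy Hy. apply G2_mono; lra.
- intros r Hr. apply part3; auto.
Qed.
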